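(* Let $d\ge3$ and let $\mathscr P_d(y,a^\dagger)$ be the space of polynomials in commuting variables $y^\mu,a^{\dagger\mu}$, $\mu=1,\dots,d$. Let $T=\eta^{\mu\nu}\frac{\partial}{\partial a^{\dagger\mu}}\frac{\partial}{\partial a^{\dagger\nu}}$, $\Box=\eta^{\mu\nu}\frac{\partial}{\partial y^\mu}\frac{\partial}{\partial y^\nu}$, $S=\eta^{\mu\nu}\frac{\partial}{\partial a^{\dagger\mu}}\frac{\partial}{\partial y^\nu}$, and let $\mathscr N=\ker T\cap\ker\Box\subset\mathscr P_d(y,a^\dagger)$. Then $S$ maps $\mathscr N$ onto $\mathscr N$, i.e. $S(\mathscr N)=\mathscr N$.
   Context: $\eta^{\mu\nu}$ is a nondegenerate constant symmetric (Minkowski) metric on $\mathbb R^d$. The operators $T,\Box,S$ pairwise commute, so $S$ preserves $\mathscr N$. *)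

(* Defs.v *)
From HB Require Import structures.
From mathcomp Require Import all_boot all_order all_algebra.
From mathcomp Require Import mpoly.
Set Implicit Arguments. Unset Strict Implicit. Unset Printing Implicit Defensive.
Import Order.TTheory GRing.Theory Num.Theory.
Local Open Scope ring_scope.

(* P_d(y, a^dagger): polynomials in the 2d commuting variables
   y^mu = 'X_(lshift d mu) and a^dagger^mu = 'X_(rshift d mu), mu < d. *)
Definition Pd (R : realFieldType) (d : nat) := {mpoly R[d + d]}.

Definition yv (d : nat) (mu : 'I_d) : 'I_(d + d) := lshift d mu.
Definition av (d : nat) (mu : 'I_d) : 'I_(d + d) := rshift d mu.

Definition opT (R : realFieldType) (d : nat) (eta : 'M[R]_d) (p : Pd R d) : Pd R d :=
  \sum_(mu < d) \sum_(nu < d) eta mu nu *: mderiv (av mu) (mderiv (av nu) p).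

Definition opBox (R : realFieldType) (d : nat) (eta : 'M[R]_d) (p : Pd R d) : Pd R d :=
  \sum_(mu < d) \sum_(nu < d) eta mu nu *: mderiv (yv mu) (mderiv (yv nu) p).

Definition opS (R : realFieldType) (d : nat) (eta : 'M[R]_d) (p : Pd R d) : Pd R d :=
  \sum_(mu < d) \sum_(nu < d) eta mu nu *: mderiv (av mu) (mderiv (yv nu) p).

Definition inN (R : realFieldType) (d : nat) (eta : 'M[R]_d) (p : Pd R d) : Prop :=
  opT eta p = 0 /\ opBox eta p = 0.

Definition minkowski (R : realFieldType) (d : nat) : 'M[R]_d :=
  \matrix_(i < d, j < d) (if i == j then (if val i == 0%N then -1 else 1) else 0).

(* Main.v *)
Require Import Defs.
From HB Require Import structures.
From mathcomp Require Import all_boot all_order all_algebra.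
From mathcomp Require Import mpoly.
From mathcomp Require Import zify.
Set Implicit Arguments. Unset Strict Implicit. Unset Printing Implicit Defensive.
Import Order.TTheory GRing.Theory Num.Theory.
Local Open Scope ring_scope.

Section Ops.
Variable R : realFieldType.
Variable d : nat.

Definition opG (c : 'M[R]_d) (u v : 'I_d -> 'I_(d+d)) (p : Pd R d) : Pd R d :=
  \sum_(mu < d) \sum_(nu < d) c mu nu *: mderiv (u mu) (mderiv (v nu) p).

Lemma opG_sum c u v (I : Type) (r : seq I) (P : pred I) (F : I -> Pd R d) :
  opG c u v (\sum_(i <- r | P i) F i) = \sum_(i <- r | P i) opG c u v (F i).
Proof.
rewrite /opG [RHS]exchange_big /=; apply: eq_bigr => mu _.
rewrite [RHS]exchange_big /=; apply: eq_bigr => nu _.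
by rewrite (raddf_sum (mderiv (v nu))) (raddf_sum (mderiv (u mu))) scaler_sumr.
Qed.

Lemma opGZ c u v a p : opG c u v (a *: p) = a *: opG c u v p.
Proof.
rewrite /opG scaler_sumr; apply: eq_bigr => mu _.
rewrite scaler_sumr; apply: eq_bigr => nu _.
by rewrite !linearZ /= !scalerA mulrC.
Qed.

Lemma opGD c u v p q : opG c u v (p + q) = opG c u v p + opG c u v q.
Proof.
rewrite /opG -big_split; apply: eq_bigr => mu _.
rewrite -big_split; apply: eq_bigr => nu _.
by rewrite (raddfD (mderiv (v nu))) (raddfD (mderiv (u mu))) scalerDr.
Qed.

Lemma opG0 c u v : opG c u v 0 = 0.
Proof. by rewrite /opG big1 // => mu _; rewrite big1 // => nu _; rewrite !mderiv0 scaler0. Qed.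

Lemma mderiv_sum i (F : 'I_d -> Pd R d) :
  mderiv i (\sum_(j < d) F j) = \sum_(j < d) mderiv i (F j).
Proof. exact: raddf_sum. Qed.

Lemma mderiv_scale i a (p : Pd R d) : mderiv i (a *: p) = a *: mderiv i p.
Proof. exact: mderivZ. Qed.

Lemma opG_der c u v a b p :
  opG c u v (mderiv a (mderiv b p)) = mderiv a (mderiv b (opG c u v p)).
Proof.
rewrite /opG !mderiv_sum; apply: eq_bigr => mu _.
rewrite !mderiv_sum; apply: eq_bigr => nu _.
rewrite !mderiv_scale; congr (_ *: _).
rewrite [mderiv (v nu) (mderiv a _)]mderiv_comm.
rewrite [mderiv (v nu) (mderiv b _)]mderiv_comm.
rewrite [mderiv (u mu) (mderiv a _)]mderiv_comm.
by rewrite [mderiv (u mu) (mderiv b _)]mderiv_comm.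
Qed.

Lemma opG_comm c u v c' u' v' p :
  opG c u v (opG c' u' v' p) = opG c' u' v' (opG c u v p).
Proof.
rewrite {2}/opG {2}/opG opG_sum; apply: eq_bigr => mu _.
rewrite opG_sum; apply: eq_bigr => nu _.
by rewrite opGZ opG_der.
Qed.
End Ops.

Ltac mac := apply/mnmP => ?; rewrite !mnmDE; lia.


Section Main.
Variable R : realFieldType.
Variable k : nat.
Local Notation d := k.+3.
Local Notation n := (d + d)%N.
Local Notation mon := 'X_{1..n}.
Local Notation eta := (minkowski R d).
Local Notation P := (Pd R d).

Definition cc (m : mon) (a b : 'I_n) : R := ((((m + U_(a))%MM b).+1 * (m a).+1)%N)%:R.

Lemma mcoeff_dd (a b : 'I_n) (p : P) m :
  (mderiv a (mderiv b p))@_m = p@_(m + U_(a) + U_(b)) * cc m a b.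
Proof. by rewrite !mcoeff_mderiv /cc natrM mulrA !mulr_natr. Qed.

Lemma opG_coef u v (p : P) m :
  (opG eta u v p)@_m = - (p@_(m + U_(u ord0) + U_(v ord0)) * cc m (u ord0) (v ord0))
   + \sum_(i < k.+2) p@_(m + U_(u (lift ord0 i)) + U_(v (lift ord0 i)))
                   * cc m (u (lift ord0 i)) (v (lift ord0 i)).
Proof.
have inner mu : (\sum_(nu < d) eta mu nu *: mderiv (u mu) (mderiv (v nu) p))@_m
    = (if val mu == 0%N then -1 else 1) * (mderiv (u mu) (mderiv (v mu) p))@_m.
  rewrite raddf_sum (bigD1 mu) //= big1 ?addr0 => [|nu /negbTE nmu].
    by rewrite mcoeffZ mxE eqxx.
  by rewrite mcoeffZ mxE eq_sym nmu mul0r.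
rewrite /opG raddf_sum big_ord_recl /= inner /= mcoeff_dd mulN1r; congr (_ + _).
by apply: eq_bigr => i _; rewrite inner /= mul1r mcoeff_dd.
Qed.

Lemma cc_neq0 m a b : cc m a b != 0.
Proof. by rewrite /cc pnatr_eq0 muln_eq0. Qed.

Lemma eqYY (i j : 'I_d) : (yv i == yv j :> 'I_n) = (i == j).
Proof. by rewrite /yv (inj_eq (@lshift_inj _ _)). Qed.
Lemma eqAA (i j : 'I_d) : (av i == av j :> 'I_n) = (i == j).
Proof. by rewrite /av (inj_eq (@rshift_inj _ _)). Qed.
Lemma eqYA (i j : 'I_d) : (yv i == av j :> 'I_n) = false.
Proof. by apply/negbTE; rewrite /yv /av eqE /=; case: i => i /= Hi; rewrite neq_ltn; apply/orP; left; apply: leq_trans Hi (leq_addr _ _). Qed.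
Lemma eqAY (i j : 'I_d) : (av i == yv j :> 'I_n) = false.
Proof. by rewrite eq_sym eqYA. Qed.
Lemma eq_lift0 q (i : 'I_q) : (lift ord0 i == ord0 :> 'I_q.+1) = false.
Proof. by apply/negbTE; rewrite eq_sym neq_lift. Qed.
Lemma eq_0lift q (i : 'I_q) : (ord0 == lift ord0 i :> 'I_q.+1) = false.
Proof. exact/negbTE/neq_lift. Qed.
Lemma eq_lift q (i j : 'I_q) : (lift ord0 i == lift ord0 j :> 'I_q.+1) = (i == j).
Proof. exact: (inj_eq (@lift_inj _ ord0)). Qed.

Definition idxE := (eqYY, eqAA, eqYA, eqAY, eq_lift0, eq_0lift, eq_lift, eqxx).
Tactic Notation "compE" hyp(E) constr(c) := let H := fresh "C" in
  have H := congr1 (fun m : mon => m c) E; rewrite /= !mnmDE !mnm1E !idxE /= in H.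


Lemma sum_neq0 (I : finType) (F : I -> R) : \sum_i F i != 0 -> exists i, F i != 0.
Proof.
case: (pickP (fun i => F i != 0)) => [i Hi|H0 H]; first by exists i.
by move: H; rewrite big1 ?eqxx // => i _; move: (H0 i) => /negbFE/eqP.
Qed.

Lemma mnm_split2 (m : mon) i : (1 < m i)%N -> m = (m - U_(i) - U_(i) + U_(i) + U_(i))%MM.
Proof.
move=> H; apply/mnmP => j; rewrite !mnmDE !mnmBE mnm1E.
by case: (i =P j) => [<-|_] /=; lia.
Qed.

Lemma uniq_gen (h : mon -> R) (i : 'I_n) (Q : mon -> bool) :
  (forall m, Q m -> (m i <= 1)%N -> h m = 0) ->
  (forall m, Q (m + U_(i) + U_(i))%MM -> h (m + U_(i) + U_(i))%MM != 0 ->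
      exists2 m', Q m' & (m' i = m i) /\ h m' != 0) ->
  forall m, Q m -> h m = 0.
Proof.
move=> H0 Hs.
suff: forall t (m : mon), (m i <= t)%N -> Q m -> h m = 0 by move=> H m; apply: H (leqnn _).
elim=> [|t IH] m Hm Qm; first by apply: H0 => //; apply: leq_trans Hm _.
case: (leqP (m i) 1) => [|H1]; first exact: H0.
case: (h m =P 0) => // /eqP nz; exfalso.
rewrite (mnm_split2 H1) in Qm nz.
have [m' Qm' [Hi nz']] := Hs _ Qm nz.
move/eqP: nz'; apply; apply: IH Qm'.
rewrite Hi !mnmBE mnm1E eqxx; lia.
Qed.


Local Notation Y0 := (@yv d ord0).
Local Notation A0 := (@av d ord0).
Local Notation Ys i := (@yv d (lift ord0 i)).
Local Notation As i := (@av d (lift ord0 i)).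

Lemma opG_rel u v (p : P) : opG eta u v p = 0 -> forall m,
  p@_(m + U_(u ord0) + U_(v ord0)) * cc m (u ord0) (v ord0)
  = \sum_(i < k.+2) p@_(m + U_(u (lift ord0 i)) + U_(v (lift ord0 i)))
                   * cc m (u (lift ord0 i)) (v (lift ord0 i)).
Proof.
move=> H m; move/mpolyP: H => /(_ m); rewrite mcoeff0 opG_coef.
by move/eqP; rewrite addrC subr_eq0 => /eqP ->.
Qed.

Lemma BoxRel (p : P) : opBox eta p = 0 -> forall m,
  p@_(m + U_(Y0) + U_(Y0)) * cc m Y0 Y0
  = \sum_(i < k.+2) p@_(m + U_(Ys i) + U_(Ys i)) * cc m (Ys i) (Ys i).
Proof. exact: (@opG_rel (@yv d) (@yv d)). Qed.

Lemma TRel (p : P) : opT eta p = 0 -> forall m,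
  p@_(m + U_(A0) + U_(A0)) * cc m A0 A0
  = \sum_(i < k.+2) p@_(m + U_(As i) + U_(As i)) * cc m (As i) (As i).
Proof. exact: (@opG_rel (@av d) (@av d)). Qed.

Lemma SCoef (p : P) m : (opS eta p)@_m =
  - (p@_(m + U_(A0) + U_(Y0)) * cc m A0 Y0)
  + \sum_(i < k.+2) p@_(m + U_(As i) + U_(Ys i)) * cc m (As i) (Ys i).
Proof. exact: (@opG_coef (@av d) (@yv d)). Qed.

Definition dataP (m : mon) := (m Y0 <= 1)%N && (m A0 <= 1)%N.

Lemma rel_step (h : P) (u : 'I_n) (w : 'I_k.+2 -> 'I_n) m :
  h@_(m + U_(u) + U_(u)) * cc m u u = \sum_(i < k.+2) h@_(m + U_(w i) + U_(w i)) * cc m (w i) (w i) ->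
  h@_(m + U_(u) + U_(u)) != 0 -> exists i, h@_(m + U_(w i) + U_(w i)) != 0.
Proof.
move=> E nz; have: \sum_(i < k.+2) h@_(m + U_(w i) + U_(w i)) * cc m (w i) (w i) != 0.
  by rewrite -E mulf_neq0 ?cc_neq0.
by case/sum_neq0 => i; rewrite mulf_eq0 negb_or => /andP [? _]; exists i.
Qed.

Lemma uniqY (h : P) : opBox eta h = 0 -> (forall m : mon, (m Y0 <= 1)%N -> h@_m = 0) -> h = 0.
Proof.
move=> HB H0; apply/mpolyP => m; rewrite mcoeff0.
apply: (@uniq_gen (fun m => h@_m) Y0 xpredT) => //; first by move=> m0 _; apply: H0.
move=> m0 _ nz.
have [i nz'] := rel_step (BoxRel HB m0) nz.
exists (m0 + U_(Ys i) + U_(Ys i))%MM => //; split => //.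
by rewrite !mnmDE !mnm1E !idxE !addn0.
Qed.

Lemma uniqA (h : P) : opT eta h = 0 -> (forall m, dataP m -> h@_m = 0) ->
  forall m : mon, (m Y0 <= 1)%N -> h@_m = 0.
Proof.
move=> HT H0.
apply: (@uniq_gen (fun m => h@_m) A0 (fun m => m Y0 <= 1)%N).
  by move=> m H1 H2; apply: H0; rewrite /dataP H1 H2.
move=> m0 Q nz; have [i nz'] := rel_step (TRel HT m0) nz.
exists (m0 + U_(As i) + U_(As i))%MM; last first.
  by split => //; rewrite !mnmDE !mnm1E !idxE !addn0.
by move: Q; rewrite !mnmDE !mnm1E !idxE !addn0.
Qed.

Lemma uniqN (h : P) : inN eta h -> (forall m, dataP m -> h@_m = 0) -> h = 0.
Proof. by case=> HT HB H0; apply: uniqY => //; apply: uniqA. Qed.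


Fixpoint Fl (g : mon -> R) (f : nat) (m : mon) {struct f} : R :=
  match f with
  | f'.+2 =>
    if (1 < m Y0)%N then
      (\sum_(i < k.+2) Fl g f' (m - U_(Y0) - U_(Y0) + U_(Ys i) + U_(Ys i))%MM
            * cc (m - U_(Y0) - U_(Y0))%MM (Ys i) (Ys i)) / cc (m - U_(Y0) - U_(Y0))%MM Y0 Y0
    else if (1 < m A0)%N then
      (\sum_(i < k.+2) Fl g f' (m - U_(A0) - U_(A0) + U_(As i) + U_(As i))%MM
            * cc (m - U_(A0) - U_(A0))%MM (As i) (As i)) / cc (m - U_(A0) - U_(A0))%MM A0 A0
    else g m
  | _ => g m
  end.

Definition fuel (m : mon) := (m Y0 + m A0)%N.
Definition El g (m : mon) := Fl g (fuel m) m.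

Lemma El_Y g (m : mon) : El g (m + U_(Y0) + U_(Y0))%MM * cc m Y0 Y0
  = \sum_(i < k.+2) El g (m + U_(Ys i) + U_(Ys i))%MM * cc m (Ys i) (Ys i).
Proof.
rewrite /El; have -> : fuel (m + U_(Y0) + U_(Y0))%MM = (fuel m).+2.
  by rewrite /fuel !mnmDE !mnm1E !idxE /=; lia.
rewrite /= !mnmDE !mnm1E !idxE /= ifT; last lia.
rewrite !addmK mulfVK ?cc_neq0 //; apply: eq_bigr => i _.
suff -> : fuel (m + U_(Ys i) + U_(Ys i))%MM = fuel m by [].
by rewrite /fuel !mnmDE !mnm1E !idxE /= !addn0.
Qed.


Lemma El_A g (m : mon) : (m Y0 <= 1)%N -> El g (m + U_(A0) + U_(A0))%MM * cc m A0 A0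
  = \sum_(i < k.+2) El g (m + U_(As i) + U_(As i))%MM * cc m (As i) (As i).
Proof.
move=> HY; rewrite /El; have -> : fuel (m + U_(A0) + U_(A0))%MM = (fuel m).+2.
  by rewrite /fuel !mnmDE !mnm1E !idxE /=; lia.
rewrite /= !mnmDE !mnm1E !idxE /= ifF; last by apply/negbTE; rewrite -leqNgt; lia.
rewrite ifT; last lia.
rewrite !addmK mulfVK ?cc_neq0 //; apply: eq_bigr => i _.
suff -> : fuel (m + U_(As i) + U_(As i))%MM = fuel m by [].
by rewrite /fuel !mnmDE !mnm1E !idxE /= !addn0.
Qed.

Lemma El_data g (m : mon) : dataP m -> El g m = g m.
Proof.
case/andP=> H1 H2; rewrite /El /fuel.
case: (m Y0 + m A0)%N => [|[|f]] //=.
by rewrite ltnNge H1 /= ltnNge H2.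
Qed.

Lemma mdeg2 (m : mon) a b : mdeg (m + U_(a) + U_(b))%MM = (mdeg m).+2.
Proof. by rewrite !mdegD !mdeg1 addn1 addn1. Qed.

Lemma El_bound g K : (forall m : mon, (K <= mdeg m)%N -> g m = 0) ->
  forall m : mon, (K <= mdeg m)%N -> El g m = 0.
Proof.
move=> Hg; suff H : forall t (m : mon), (fuel m <= t)%N -> (K <= mdeg m)%N -> El g m = 0.
  by move=> m; apply: H (leqnn _).
elim/ltn_ind => t IH m Hf Hd; rewrite /El.
case E: (fuel m) => [|[|f]] /=; try by apply: Hg.
case: ifP => H1.
  rewrite big1 ?mul0r // => i _.
  set x := (m - U_(Y0) - U_(Y0) + U_(Ys i) + U_(Ys i))%MM.
  have Ef : fuel x = f.
    by move: E; rewrite /x /fuel !mnmDE !mnmBE !mnm1E !idxE /=; lia.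
  have Dx : mdeg x = mdeg m by rewrite /x mdeg2 {2}(mnm_split2 H1) mdeg2.
  have -> : Fl g f x = El g x by rewrite /El Ef.
  by rewrite (IH (fuel x)) ?mul0r ?Dx // Ef; apply: leq_trans Hf; rewrite E.
case: ifP => H2; last by apply: Hg.
rewrite big1 ?mul0r // => i _.
set x := (m - U_(A0) - U_(A0) + U_(As i) + U_(As i))%MM.
have Ef : fuel x = f.
  by move: E; rewrite /x /fuel !mnmDE !mnmBE !mnm1E !idxE /=; lia.
have Dx : mdeg x = mdeg m by rewrite /x mdeg2 {2}(mnm_split2 H2) mdeg2.
have -> : Fl g f x = El g x by rewrite /El Ef.
by rewrite (IH (fuel x)) ?mul0r ?Dx // Ef; apply: leq_trans Hf; rewrite E.
Qed.

Lemma opBoxE (p : P) : opBox eta p = opG eta (@yv d) (@yv d) p. Proof. by []. Qed.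
Lemma opTE (p : P) : opT eta p = opG eta (@av d) (@av d) p. Proof. by []. Qed.
Lemma opSE (p : P) : opS eta p = opG eta (@av d) (@yv d) p. Proof. by []. Qed.

Definition pol g K : P := \sum_(m : 'X_{1..n < K}) El g m *: 'X_[m].

Lemma pol_coef g K : (forall m : mon, (K <= mdeg m)%N -> g m = 0) ->
  forall m, (pol g K)@_m = El g m.
Proof.
move=> Hg m; case: (ltnP (mdeg m) K) => H; first exact: mcoeff_mpoly.
rewrite (El_bound Hg H) /pol raddf_sum big1 // => [[m' Hm']] _ /=.
rewrite mcoeffZ mcoeffX; case: eqP => [E|]; last by rewrite mulr0.
by move: Hm'; rewrite E => /leq_trans/(_ H); rewrite ltnn.
Qed.

Lemma lift_ex g K : (forall m : mon, (K <= mdeg m)%N -> g m = 0) ->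
  exists p : P, inN eta p /\ forall m, dataP m -> p@_m = g m.
Proof.
move=> Hg; exists (pol g K).
have HB : opBox eta (pol g K) = 0.
  apply/mpolyP => m; rewrite mcoeff0 opBoxE opG_coef !pol_coef //.
  under eq_bigr => i _ do rewrite pol_coef //.
  by rewrite -El_Y addrC subrr.
split; last by move=> m Hm; rewrite pol_coef // El_data.
split=> //; apply: uniqY.
  by rewrite opBoxE opTE opG_comm -opBoxE HB opG0.
move=> m Hm; rewrite opTE opG_coef !pol_coef //.
under eq_bigr => i _ do rewrite pol_coef //.
by rewrite -El_A // addrC subrr.
Qed.


Lemma add_neq0 (a b : R) : a + b != 0 -> a != 0 \/ b != 0.
Proof. by case: (a =P 0) => [->|/eqP]; [rewrite add0r; right|left]. Qed.

Lemma rel_ex (X c : R) (F : 'I_k.+2 -> R) : X * c = \sum_i F i -> X != 0 -> c != 0 ->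
  exists i, F i != 0.
Proof. by move=> E nX nc; apply: sum_neq0; rewrite -E mulf_neq0. Qed.

Lemma rel_single (X c : R) (F : 'I_k.+2 -> R) i0 : X * c = \sum_i F i ->
  (forall i, i != i0 -> F i = 0) -> F i0 != 0 -> X != 0.
Proof.
move=> E H0 nz; apply/eqP => X0; move: E; rewrite X0 mul0r (bigD1 i0) //= big1 ?addr0.
  by move=> E; move: nz; rewrite -E eqxx.
by move=> i /H0.
Qed.

Lemma term_nz (x c : R) : x * c != 0 -> x != 0.
Proof. by apply: contraNneq => ->; rewrite mul0r. Qed.

Section SData.
Variable p : P.
Hypothesis Np : inN eta p.

Lemma S00_supp (b : mon) : (opS eta p)@_b != 0 ->
  p@_(b + U_(A0) + U_(Y0)) != 0 \/ exists i, p@_(b + U_(As i) + U_(Ys i)) != 0.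
Proof.
rewrite SCoef => /add_neq0 [H|H]; first by left; move: H; rewrite oppr_eq0; apply: term_nz.
by right; have [i Hi] := sum_neq0 H; exists i; apply: term_nz Hi.
Qed.

Lemma S00_single (b : mon) : (forall i, p@_(b + U_(As i) + U_(Ys i)) = 0) ->
  p@_(b + U_(A0) + U_(Y0)) != 0 -> (opS eta p)@_b != 0.
Proof.
move=> H0 nz; rewrite SCoef big1 ?addr0 ?oppr_eq0 ?mulf_neq0 ?cc_neq0 //.
by move=> i _; rewrite H0 mul0r.
Qed.

Lemma S10_supp (b : mon) : (opS eta p)@_(b + U_(Y0))%MM != 0 ->
  (exists i, p@_(b + U_(A0) + U_(Ys i) + U_(Ys i)) != 0) \/
  (exists i, p@_(b + U_(Y0) + U_(As i) + U_(Ys i)) != 0).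
Proof.
rewrite SCoef => /add_neq0 [H|H].
  left; move: H; rewrite oppr_eq0 => /term_nz.
  have -> : (b + U_(Y0) + U_(A0) + U_(Y0) = b + U_(A0) + U_(Y0) + U_(Y0))%MM by mac.
  move=> nz; have [i Hi] := rel_ex (BoxRel Np.2 _) nz (cc_neq0 _ _ _).
  by exists i; apply: term_nz Hi.
by right; have [i Hi] := sum_neq0 H; exists i; apply: term_nz Hi.
Qed.

Lemma S10_single (b : mon) i0 : (forall i, p@_(b + U_(Y0) + U_(As i) + U_(Ys i)) = 0) ->
  (forall i, i != i0 -> p@_(b + U_(A0) + U_(Ys i) + U_(Ys i)) = 0) ->
  p@_(b + U_(A0) + U_(Ys i0) + U_(Ys i0)) != 0 -> (opS eta p)@_(b + U_(Y0))%MM != 0.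
Proof.
move=> H0 H1 nz; rewrite SCoef big1 ?addr0 ?oppr_eq0; last by move=> i _; rewrite H0 mul0r.
rewrite mulf_neq0 ?cc_neq0 //.
have -> : (b + U_(Y0) + U_(A0) + U_(Y0) = b + U_(A0) + U_(Y0) + U_(Y0))%MM by mac.
apply: (rel_single (BoxRel Np.2 _) (i0 := i0)); first by move=> i /H1 ->; rewrite mul0r.
by rewrite mulf_neq0 ?cc_neq0.
Qed.

Lemma S01_supp (b : mon) : (opS eta p)@_(b + U_(A0))%MM != 0 ->
  (exists i, p@_(b + U_(Y0) + U_(As i) + U_(As i)) != 0) \/
  (exists i, p@_(b + U_(A0) + U_(As i) + U_(Ys i)) != 0).
Proof.
rewrite SCoef => /add_neq0 [H|H].
  left; move: H; rewrite oppr_eq0 => /term_nz.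
  have -> : (b + U_(A0) + U_(A0) + U_(Y0) = b + U_(Y0) + U_(A0) + U_(A0))%MM by mac.
  move=> nz; have [i Hi] := rel_ex (TRel Np.1 _) nz (cc_neq0 _ _ _).
  by exists i; apply: term_nz Hi.
by right; have [i Hi] := sum_neq0 H; exists i; apply: term_nz Hi.
Qed.

Lemma S01_single (b : mon) i0 : (forall i, p@_(b + U_(A0) + U_(As i) + U_(Ys i)) = 0) ->
  (forall i, i != i0 -> p@_(b + U_(Y0) + U_(As i) + U_(As i)) = 0) ->
  p@_(b + U_(Y0) + U_(As i0) + U_(As i0)) != 0 -> (opS eta p)@_(b + U_(A0))%MM != 0.
Proof.
move=> H0 H1 nz; rewrite SCoef big1 ?addr0 ?oppr_eq0; last by move=> i _; rewrite H0 mul0r.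
rewrite mulf_neq0 ?cc_neq0 //.
have -> : (b + U_(A0) + U_(A0) + U_(Y0) = b + U_(Y0) + U_(A0) + U_(A0))%MM by mac.
apply: (rel_single (TRel Np.1 _) (i0 := i0)); first by move=> i /H1 ->; rewrite mul0r.
by rewrite mulf_neq0 ?cc_neq0.
Qed.

Lemma S11_supp (b : mon) : (opS eta p)@_(b + U_(Y0) + U_(A0))%MM != 0 ->
  (exists i j, p@_(b + U_(Ys i) + U_(Ys i) + U_(As j) + U_(As j)) != 0) \/
  (exists i, p@_(b + U_(Y0) + U_(A0) + U_(As i) + U_(Ys i)) != 0).
Proof.
rewrite SCoef => /add_neq0 [H|H].
  left; move: H; rewrite oppr_eq0 => /term_nz.
  have -> : (b + U_(Y0) + U_(A0) + U_(A0) + U_(Y0)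
           = b + U_(A0) + U_(A0) + U_(Y0) + U_(Y0))%MM by mac.
  move=> nz; have [i Hi] := rel_ex (BoxRel Np.2 _) nz (cc_neq0 _ _ _).
  move: Hi => /term_nz.
  have -> : (b + U_(A0) + U_(A0) + U_(Ys i) + U_(Ys i)
           = b + U_(Ys i) + U_(Ys i) + U_(A0) + U_(A0))%MM by mac.
  move=> nz'; have [j Hj] := rel_ex (TRel Np.1 _) nz' (cc_neq0 _ _ _).
  by exists i, j; apply: term_nz Hj.
by right; have [i Hi] := sum_neq0 H; exists i; apply: term_nz Hi.
Qed.

Lemma S11_single (b : mon) i0 j0 :
  (forall i, p@_(b + U_(Y0) + U_(A0) + U_(As i) + U_(Ys i)) = 0) ->
  (forall i j, (i != i0) || (j != j0) ->
      p@_(b + U_(Ys i) + U_(Ys i) + U_(As j) + U_(As j)) = 0) ->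
  p@_(b + U_(Ys i0) + U_(Ys i0) + U_(As j0) + U_(As j0)) != 0 ->
  (opS eta p)@_(b + U_(Y0) + U_(A0))%MM != 0.
Proof.
move=> H0 H1 nz; rewrite SCoef big1 ?addr0 ?oppr_eq0; last by move=> i _; rewrite H0 mul0r.
rewrite mulf_neq0 ?cc_neq0 //.
have -> : (b + U_(Y0) + U_(A0) + U_(A0) + U_(Y0)
         = b + U_(A0) + U_(A0) + U_(Y0) + U_(Y0))%MM by mac.
have E i : (b + U_(A0) + U_(A0) + U_(Ys i) + U_(Ys i)
           = b + U_(Ys i) + U_(Ys i) + U_(A0) + U_(A0))%MM by mac.
apply: (rel_single (BoxRel Np.2 _) (i0 := i0)).
  move=> i ni; rewrite E; apply/eqP; rewrite mulf_eq0; apply/orP; left.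
  apply/eqP; apply: contraNeq (cc_neq0 (b + U_(Ys i) + U_(Ys i))%MM A0 A0) => nzi.
  have [j Hj] := rel_ex (TRel Np.1 _) nzi (cc_neq0 _ _ _).
  by move: Hj; rewrite H1 ?ni ?mul0r ?eqxx.
rewrite E mulf_neq0 ?cc_neq0 //.
apply: (rel_single (TRel Np.1 _) (i0 := j0)).
  by move=> j nj; rewrite H1 ?nj ?orbT ?mul0r.
by rewrite mulf_neq0 ?cc_neq0.
Qed.

End SData.

Definition free (m : mon) := (m Y0 == 0%N) && (m A0 == 0%N).
Local Notation j1 := (ord0 : 'I_k.+2).
Local Notation j2 := (lift ord0 (ord0 : 'I_k.+1) : 'I_k.+2).
Definition phi (m : mon) := (m (Ys j1) + m (As j2))%N.
Definition rank (m : mon) := (mdeg m - phi m + (if free m then (mdeg m).+1 else 0))%N.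

Lemma phi_le m : (phi m <= mdeg m)%N.
Proof.
rewrite /phi mdegE (bigD1 (Ys j1)) //= (bigD1 (As j2)) /=; first lia.
by [].
Qed.

Lemma j12 : (j1 == j2) = false. Proof. by []. Qed.

Lemma rank00 (b : mon) : b Y0 = 0%N -> b A0 = 0%N -> rank b = (mdeg b - phi b + (mdeg b).+1)%N.
Proof. by move=> bY bA; rewrite /rank /free bY bA. Qed.

Lemma rank10 (b : mon) : b Y0 = 0%N -> b A0 = 0%N -> rank (b + U_(Y0))%MM = ((mdeg b).+1 - phi b)%N.
Proof.
move=> bY bA; rewrite /rank /free /phi !mnmDE !mnm1E !idxE /= bY bA /= mdegD mdeg1.
by rewrite !addn0 addn1.
Qed.

Lemma rank01 (b : mon) : b Y0 = 0%N -> b A0 = 0%N -> rank (b + U_(A0))%MM = ((mdeg b).+1 - phi b)%N.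
Proof.
move=> bY bA; rewrite /rank /free /phi !mnmDE !mnm1E !idxE /= bY bA /= mdegD mdeg1.
by rewrite !addn0 addn1.
Qed.

Lemma rank11 (b : mon) : b Y0 = 0%N -> b A0 = 0%N -> rank (b + U_(Y0) + U_(A0))%MM = ((mdeg b).+2 - phi b)%N.
Proof.
move=> bY bA; rewrite /rank /free /phi !mnmDE !mnm1E !idxE /= bY bA /= mdeg2.
by rewrite !addn0.
Qed.

Lemma data_dec m : dataP m -> exists b : mon, [/\ b Y0 = 0%N, b A0 = 0%N &
  [\/ m = b, m = (b + U_(Y0))%MM, m = (b + U_(A0))%MM | m = (b + U_(Y0) + U_(A0))%MM]].
Proof.
case/andP => H1 H2.
have [eY|eY] : m Y0 = 0%N \/ m Y0 = 1%N by lia.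
  have [eA|eA] : m A0 = 0%N \/ m A0 = 1%N by lia.
    by exists m; split => //; constructor 1.
  exists (m - U_(A0))%MM; rewrite !mnmBE !mnm1E !idxE /= eY eA; split => //.
  constructor 3; apply/mnmP => j; rewrite !mnmDE !mnmBE mnm1E.
  by case: (A0 =P j) => [<-|_] /=; lia.
have [eA|eA] : m A0 = 0%N \/ m A0 = 1%N by lia.
  exists (m - U_(Y0))%MM; rewrite !mnmBE !mnm1E !idxE /= eY eA; split => //.
  constructor 2; apply/mnmP => j; rewrite !mnmDE !mnmBE mnm1E.
  by case: (Y0 =P j) => [<-|_] /=; lia.
exists (m - U_(Y0) - U_(A0))%MM; rewrite !mnmBE !mnm1E !idxE /= eY eA; split => //.
constructor 4; apply/mnmP => j; rewrite !mnmDE !mnmBE !mnm1E.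
case: (Y0 =P j) => [<-|_]; rewrite ?idxE /=; first lia.
by case: (A0 =P j) => [<-|_] /=; lia.
Qed.

Lemma indR (a b : mon) : ((a == b)%:R : R) != 0 -> a = b.
Proof. by case: (a =P b) => // _; rewrite eqxx. Qed.

Definition WProp (x : mon) := exists p : P, [/\ inN eta p, (opS eta p)@_x != 0 &
  forall m, dataP m -> m != x -> (rank x <= rank m)%N -> (opS eta p)@_m = 0].

Ltac dat := rewrite /dataP !mnmDE !mnm1E !idxE /= ?addn0 ?add0n;
  repeat match goal with H : _ = 0%N |- _ => rewrite H end.

Lemma wit00 (b : mon) : b Y0 = 0%N -> b A0 = 0%N -> WProp b.
Proof.
move=> bY bA; pose ga := (b + U_(Y0) + U_(A0))%MM.
have HK : forall m : mon, ((mdeg ga).+1 <= mdeg m)%N -> ((m == ga)%:R : R) = 0.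
  by move=> m Hm; case: (m =P ga) => [E|] //; move: Hm; rewrite E ltnn.
have [p [Np Hp]] := lift_ex HK.
exists p; split => //.
  apply: S00_single => [i|]; rewrite Hp; try by dat.
    case: (_ =P ga) => // E; exfalso; compE E (Y0); lia.
  by rewrite (_ : _ + _ + _ = ga)%MM ?eqxx ?oner_eq0 //; mac.
move=> m Dm nmx Hr; case: (eqVneq ((opS eta p)@_m) 0) => // nz; exfalso.
have [b' [bY' bA' Hm]] := data_dec Dm.
case: Hm => E; subst m.
- case/S00_supp: nz => [|[i]]; rewrite Hp; try by dat.
    move/indR; rewrite /ga => E; move/eqP: nmx; apply; apply/mnmP => j.
    have := congr1 (fun m : mon => m j) E; rewrite !mnmDE; lia.
  by move/indR => E; compE E (Y0); lia.
- case/(S10_supp Np): nz => [[i]|[i]]; rewrite Hp; try by dat.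
    by move/indR => E; compE E (Y0); lia.
  by move/indR => E; compE E (A0); lia.
- case/(S01_supp Np): nz => [[i]|[i]]; rewrite Hp; try by dat.
    by move/indR => E; compE E (A0); lia.
  by move/indR => E; compE E (Y0); lia.
- case/(S11_supp Np): nz => [[i [j]]|[i]]; rewrite Hp; try by dat.
    by move/indR => E; compE E (Y0); lia.
  move/indR => E; move: Hr; rewrite rank00 // rank11 //.
  have := phi_le b'; have := phi_le b.
  have -> : mdeg b = (mdeg b').+2.
    have := congr1 mdeg E; rewrite /ga !mdegD !mdeg1; lia.
  lia.
Qed.

Lemma wit10 (b : mon) : b Y0 = 0%N -> b A0 = 0%N -> WProp (b + U_(Y0))%MM.
Proof.
move=> bY bA; pose ga := (b + U_(A0) + U_(Ys j1) + U_(Ys j1))%MM.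
have HK : forall m : mon, ((mdeg ga).+1 <= mdeg m)%N -> ((m == ga)%:R : R) = 0.
  by move=> m Hm; case: (m =P ga) => [E|] //; move: Hm; rewrite E ltnn.
have [p [Np Hp]] := lift_ex HK.
exists p; split => //.
  apply: (S10_single Np (i0 := j1)) => [i|i ni|]; rewrite Hp; try by dat.
  - by case: (_ =P ga) => // E; exfalso; rewrite /ga in E; compE E Y0; lia.
  - case: (_ =P ga) => // E; exfalso; rewrite /ga in E; compE E (Ys j1).
    by move: C; rewrite (negbTE ni); lia.
  - by rewrite eqxx oner_eq0.
move=> m Dm nmx Hr; case: (eqVneq ((opS eta p)@_m) 0) => // nz; exfalso.
have [b' [bY' bA' Hm]] := data_dec Dm.
case: Hm => E; subst m.
- case/S00_supp: nz => [|[i]]; rewrite Hp; try by dat.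
    by move/indR; rewrite /ga => E; compE E Y0; lia.
  by move/indR; rewrite /ga => E; compE E A0; lia.
- case/(S10_supp Np): nz => [[i]|[i]]; rewrite Hp; try by dat.
    move/indR; rewrite /ga => E.
    case: (i =P j1) => [ei|/eqP ni].
      subst i; move/eqP: nmx; apply; apply/mnmP => j.
      have := congr1 (fun m : mon => m j) E; rewrite !mnmDE; lia.
    move: Hr; rewrite !rank10 //.
    have := phi_le b; have := phi_le b'; have := congr1 mdeg E; rewrite !mdegD !mdeg1.
    compE E (Ys j1); compE E (As j2); move: C C0; rewrite (negbTE ni) /phi; lia.
  by move/indR; rewrite /ga => E; compE E Y0; lia.
- case/(S01_supp Np): nz => [[i]|[i]]; rewrite Hp; try by dat.
    by move/indR; rewrite /ga => E; compE E Y0; lia.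
  move/indR; rewrite /ga => E.
  move: Hr; rewrite rank10 // rank01 //.
  have := phi_le b; have := phi_le b'; have := congr1 mdeg E; rewrite !mdegD !mdeg1.
  compE E (Ys j1); compE E (As j2); move: C C0.
  case: (i =P j1) => [->|_]; rewrite /phi /=; lia.
- case/(S11_supp Np): nz => [[i [j]]|[i]]; rewrite Hp; try by dat.
    by move/indR; rewrite /ga => E; compE E A0; lia.
  by move/indR; rewrite /ga => E; compE E Y0; lia.
Qed.

Lemma wit01 (b : mon) : b Y0 = 0%N -> b A0 = 0%N -> WProp (b + U_(A0))%MM.
Proof.
move=> bY bA; pose ga := (b + U_(Y0) + U_(As j2) + U_(As j2))%MM.
have HK : forall m : mon, ((mdeg ga).+1 <= mdeg m)%N -> ((m == ga)%:R : R) = 0.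
  by move=> m Hm; case: (m =P ga) => [E|] //; move: Hm; rewrite E ltnn.
have [p [Np Hp]] := lift_ex HK.
exists p; split => //.
  apply: (S01_single Np (i0 := j2)) => [i|i ni|]; rewrite Hp; try by dat.
  - by case: (_ =P ga) => // E; exfalso; rewrite /ga in E; compE E A0; lia.
  - case: (_ =P ga) => // E; exfalso; rewrite /ga in E; compE E (As j2).
    by move: C; rewrite (negbTE ni); lia.
  - by rewrite eqxx oner_eq0.
move=> m Dm nmx Hr; case: (eqVneq ((opS eta p)@_m) 0) => // nz; exfalso.
have [b' [bY' bA' Hm]] := data_dec Dm.
case: Hm => E; subst m.
- case/S00_supp: nz => [|[i]]; rewrite Hp; try by dat.
    by move/indR; rewrite /ga => E; compE E A0; lia.
  by move/indR; rewrite /ga => E; compE E Y0; lia.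
- case/(S10_supp Np): nz => [[i]|[i]]; rewrite Hp; try by dat.
    by move/indR; rewrite /ga => E; compE E A0; lia.
  move/indR; rewrite /ga => E.
  move: Hr; rewrite rank01 // rank10 //.
  have := phi_le b; have := phi_le b'; have := congr1 mdeg E; rewrite !mdegD !mdeg1.
  compE E (Ys j1); compE E (As j2); move: C C0.
  case: (i =P j1) => [->|_]; rewrite /phi /=; first lia.
  by case: (i =P j2) => _ /=; lia.
- case/(S01_supp Np): nz => [[i]|[i]]; rewrite Hp; try by dat.
    move/indR; rewrite /ga => E.
    case: (i =P j2) => [ei|/eqP ni].
      subst i; move/eqP: nmx; apply; apply/mnmP => j.
      have := congr1 (fun m : mon => m j) E; rewrite !mnmDE; lia.
    move: Hr; rewrite !rank01 //.
    have := phi_le b; have := phi_le b'; have := congr1 mdeg E; rewrite !mdegD !mdeg1.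
    compE E (Ys j1); compE E (As j2); move: C C0; rewrite (negbTE ni) /phi; lia.
  by move/indR; rewrite /ga => E; compE E A0; lia.
- case/(S11_supp Np): nz => [[i [j]]|[i]]; rewrite Hp; try by dat.
    by move/indR; rewrite /ga => E; compE E Y0; lia.
  by move/indR; rewrite /ga => E; compE E A0; lia.
Qed.

Lemma eq_cancel2 (m1 m2 : mon) a b :
  ((m1 + U_(a) + U_(b))%MM == (m2 + U_(a) + U_(b))%MM) = (m1 == m2).
Proof.
apply/eqP/eqP => [E|->] //; apply/mnmP => j.
by have := congr1 (fun m : mon => m j) E; rewrite !mnmDE; lia.
Qed.

Lemma wit11 (b : mon) : b Y0 = 0%N -> b A0 = 0%N -> WProp (b + U_(Y0) + U_(A0))%MM.
Proof.
move=> bY bA; pose ga := (b + U_(Ys j1) + U_(Ys j1) + U_(As j2) + U_(As j2))%MM.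
have gaY : ga Y0 = 0%N by rewrite /ga !mnmDE !mnm1E !idxE /= bY.
have gaA : ga A0 = 0%N by rewrite /ga !mnmDE !mnm1E !idxE /= bA.
pose g := fun m : mon => ((m == ga)%:R : R) + (if (m Y0 == 1%N) && (m A0 == 1%N) then
   \sum_i (((m + U_(As i) + U_(Ys i))%MM == (ga + U_(Y0) + U_(A0))%MM)%:R * cc m (As i) (Ys i))
   else 0).
have HK : forall m : mon, ((mdeg ga).+1 <= mdeg m)%N -> g m = 0.
  move=> m Hm; rewrite /g; case: (m =P ga) => [E|_]; first by move: Hm; rewrite E ltnn.
  rewrite add0r; case: ifP => // _; rewrite big1 // => i _.
  case: eqP => [E|_]; last by rewrite mul0r.
  by move: Hm; have := congr1 mdeg E; rewrite !mdeg2; case=> ->; rewrite ltnn.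
have [p [Np Hp]] := lift_ex HK.
have gfree (z : mon) : z Y0 = 0%N -> z A0 = 0%N -> g z = (z == ga)%:R.
  by move=> zY zA; rewrite /g zY /= addr0.
have gone (z : mon) : (z Y0 + z A0 = 1)%N -> g z = 0.
  move=> H; rewrite /g; case: (z =P ga) => [E|_].
    by move: H; rewrite E gaY gaA.
  by rewrite add0r ifF //; apply/negbTE; apply/nandP; lia.
have g11 (z : mon) : z Y0 = 0%N -> z A0 = 0%N -> g (z + U_(Y0) + U_(A0))%MM =
   \sum_i (((z + U_(Y0) + U_(A0) + U_(As i) + U_(Ys i))%MM == (ga + U_(Y0) + U_(A0))%MM)%:R
          * cc (z + U_(Y0) + U_(A0))%MM (As i) (Ys i)).
  move=> zY zA; rewrite /g; case: (_ =P ga) => [E|_].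
    by rewrite /ga in E; compE E Y0; lia.
  by rewrite add0r !mnmDE !mnm1E !idxE /= zY zA.
have S00z (z : mon) : z Y0 = 0%N -> z A0 = 0%N -> (opS eta p)@_z = 0.
  move=> zY zA; rewrite SCoef Hp; last by dat.
  have -> : (z + U_(A0) + U_(Y0) = z + U_(Y0) + U_(A0))%MM by mac.
  rewrite g11 // (_ : cc z A0 Y0 = 1); last first.
    by rewrite /cc !mnmDE !mnm1E !idxE /= zY zA.
  rewrite mulr1 addrC; apply/eqP; rewrite subr_eq0; apply/eqP; apply: eq_bigr => i _.
  rewrite Hp; last by dat.
  rewrite gfree; last by rewrite !mnmDE !mnm1E !idxE /= zA.
    2: by rewrite !mnmDE !mnm1E !idxE /= zY.
  have -> : (z + U_(Y0) + U_(A0) + U_(As i) + U_(Ys i)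
           = z + U_(As i) + U_(Ys i) + U_(Y0) + U_(A0))%MM by mac.
  rewrite eq_cancel2; congr (_ * _).
  by rewrite /cc !mnmDE !mnm1E !idxE /= !addn0.
exists p; split => //.
  apply: (S11_single Np (i0 := j1) (j0 := j2)) => [i|i j Hij|]; rewrite Hp; try by dat.
  - have -> : (b + U_(Y0) + U_(A0) + U_(As i) + U_(Ys i)
             = b + U_(As i) + U_(Ys i) + U_(Y0) + U_(A0))%MM by mac.
    rewrite g11; try by rewrite !mnmDE !mnm1E !idxE /= ?bY ?bA.
    rewrite big1 // => i' _; case: eqP => [E|_]; last by rewrite mul0r.
    exfalso; rewrite /ga in E; compE E (Ys j1); compE E (As j2); move: C C0.
    case: (i =P j1) => [->|_]; case: (i' =P j1) => [->|_];
      case: (i =P j2) => _; case: (i' =P j2) => _ /=; lia.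
  - rewrite gfree; try by rewrite !mnmDE !mnm1E !idxE /= ?bY ?bA.
    case: eqP => // E; exfalso; rewrite /ga in E; compE E (Ys j1); compE E (As j2).
    by move: C C0; case/orP: Hij => /negbTE ->; lia.
  - by rewrite gfree ?eqxx ?oner_eq0 // !mnmDE !mnm1E !idxE /= ?bY ?bA.
move=> m Dm nmx Hr; case: (eqVneq ((opS eta p)@_m) 0) => // nz; exfalso.
have [b' [bY' bA' Hm]] := data_dec Dm.
case: Hm => E; subst m.
- by move: nz; rewrite S00z ?eqxx.
- case/(S10_supp Np): nz => [[i]|[i]]; rewrite Hp; try by dat.
    by rewrite gone ?eqxx // !mnmDE !mnm1E !idxE /= bY' bA'.
  by rewrite gone ?eqxx // !mnmDE !mnm1E !idxE /= bY' bA'.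
- case/(S01_supp Np): nz => [[i]|[i]]; rewrite Hp; try by dat.
    by rewrite gone ?eqxx // !mnmDE !mnm1E !idxE /= bY' bA'.
  by rewrite gone ?eqxx // !mnmDE !mnm1E !idxE /= bY' bA'.
- case/(S11_supp Np): nz => [[i [j]]|[i]]; rewrite Hp; try by dat.
    rewrite gfree; try by rewrite !mnmDE !mnm1E !idxE /= ?bY' ?bA'.
    move/indR; rewrite /ga => E.
    case: (i =P j1) => [ei|/eqP ni]; first case: (j =P j2) => [ej|/eqP nj].
    + subst i j; move/eqP: nmx; apply; apply/mnmP => j.
      have := congr1 (fun m : mon => m j) E; rewrite !mnmDE; lia.
    + move: Hr; rewrite !rank11 //.
      have := phi_le b; have := phi_le b'; have := congr1 mdeg E; rewrite !mdegD !mdeg1.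
      subst i; compE E (Ys j1); compE E (As j2); move: C C0; rewrite (negbTE nj) /phi; lia.
    + move: Hr; rewrite !rank11 //.
      have := phi_le b; have := phi_le b'; have := congr1 mdeg E; rewrite !mdegD !mdeg1.
      compE E (Ys j1); compE E (As j2); move: C C0; rewrite (negbTE ni) /phi.
      by case: (j =P j2) => _ /=; lia.
  have -> : (b' + U_(Y0) + U_(A0) + U_(As i) + U_(Ys i)
           = b' + U_(As i) + U_(Ys i) + U_(Y0) + U_(A0))%MM by mac.
  rewrite g11; try by rewrite !mnmDE !mnm1E !idxE /= ?bY' ?bA'.
  case/sum_neq0 => i' /term_nz /indR; rewrite /ga => E.
  move: Hr; rewrite !rank11 //.
  have := phi_le b; have := phi_le b'; have := congr1 mdeg E; rewrite !mdegD !mdeg1.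
  compE E (Ys j1); compE E (As j2); move: C C0; rewrite /phi.
  case: (i =P j1) => [->|_]; case: (i' =P j1) => [->|_];
    case: (i =P j2) => _; case: (i' =P j2) => _ /=; lia.
Qed.

Lemma witness x : dataP x -> WProp x.
Proof.
case/data_dec => b [bY bA []] ->; [exact: wit00 | exact: wit10 | exact: wit01 | exact: wit11].
Qed.

Lemma Spres (p : P) : inN eta p -> inN eta (opS eta p).
Proof.
case=> HT HB; split.
  by rewrite opTE opSE opG_comm -opTE HT opG0.
by rewrite opBoxE opSE opG_comm -opBoxE HB opG0.
Qed.

Lemma inND (p q : P) : inN eta p -> inN eta q -> inN eta (p + q).
Proof.
case=> Tp Bp [Tq Bq]; split.
  by rewrite opTE opGD -!opTE Tp Tq addr0.
by rewrite opBoxE opGD -!opBoxE Bp Bq addr0.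
Qed.

Lemma inNZ a (p : P) : inN eta p -> inN eta (a *: p).
Proof.
case=> Tp Bp; split.
  by rewrite opTE opGZ -!opTE Tp scaler0.
by rewrite opBoxE opGZ -!opBoxE Bp scaler0.
Qed.

Definition Im (q : P) := exists p : P, inN eta p /\ opS eta p = q.

Lemma Im_add (p q : P) : Im p -> Im q -> Im (p + q).
Proof.
case=> [p' [Np <-]] [q' [Nq <-]]; exists (p' + q'); split; first exact: inND.
by rewrite !opSE opGD.
Qed.

Lemma Im_scale a (p : P) : Im p -> Im (a *: p).
Proof.
case=> [p' [Np <-]]; exists (a *: p'); split; first exact: inNZ.
by rewrite !opSE opGZ.
Qed.

Lemma img_rank r : forall h : P, inN eta h ->
  (forall m, dataP m -> (r <= rank m)%N -> h@_m = 0) -> Im h.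
Proof.
elim: r => [|r IH] h Nh Hh.
  have -> : h = 0 by apply: uniqN => // m Dm; apply: Hh.
  by exists 0; split; [split; rewrite ?opTE ?opBoxE opG0 | rewrite opSE opG0].
suff H : forall (s : seq mon) (h : P), inN eta h ->
    (forall m, dataP m -> (r < rank m)%N -> h@_m = 0) ->
    (forall m, dataP m -> rank m = r -> m \notin s -> h@_m = 0) -> Im h.
  apply: (H (msupp h)) => // m Dm;
    first [exact: (Hh m Dm) | move=> _ Hs; exact: memN_msupp_eq0 Hs].
clear Nh Hh; elim=> [|x s IHs] {}h Nh H1 H2.
  apply: IH => // m Dm; rewrite leq_eqVlt => /orP [/eqP Er|]; last exact: H1.
  by apply: H2.
case Ex: (dataP x && (rank x == r)); last first.
  apply: IHs => // m Dm Er Hs; apply: H2 => //; rewrite in_cons negb_or Hs andbT.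
  by apply/eqP => Emx; move: Ex; rewrite -Emx Dm Er eqxx.
case/andP: Ex => Dx /eqP Erx.
have [p0 [Np0 nz0 Z0]] := witness Dx.
pose c := (opS eta p0)@_x.
pose h' := h + (- (h@_x / c)) *: opS eta p0.
have Ih' : Im h'.
  apply: IHs.
  - by apply: inND => //; apply: inNZ; apply: Spres.
  - move=> m Dm Hr; rewrite mcoeffD mcoeffZ H1 // Z0 ?mulr0 ?addr0 //.
      by apply/eqP => Emx; move: Hr; rewrite Emx Erx ltnn.
    by rewrite Erx ltnW.
  - move=> m Dm Er Hs; case: (eqVneq m x) => [->|nmx].
      by rewrite mcoeffD mcoeffZ -/c mulNr divfK // subrr.
    rewrite mcoeffD mcoeffZ H2 //; last by rewrite in_cons negb_or nmx.
    by rewrite Z0 // ?mulr0 ?addr0 // Erx Er.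
have -> : h = h' + (h@_x / c) *: opS eta p0 by rewrite /h' -addrA -scalerDl addNr scale0r addr0.
apply: Im_add => //; apply: Im_scale; exists p0; split => //.
Qed.

Lemma surjS (q : P) : inN eta q -> Im q.
Proof.
move=> Nq; apply: (img_rank (r := (2 * msize q)%N)) => // m Dm Hr.
case: (boolP (m \in msupp q)) => [Hm|]; last exact: memN_msupp_eq0.
have := msize_mdeg_lt Hm; have := phi_le m; move: Hr; rewrite /rank.
by case: (free m) => /=; lia.
Qed.

End Main.

Theorem mainTheorem10 (R : realFieldType) (d : nat) (hd : (3 <= d)%N) :
  let eta := minkowski R d in
  (forall p : Pd R d, inN eta p -> inN eta (opS eta p)) /\
  (forall q : Pd R d, inN eta q -> exists p : Pd R d, inN eta p /\ opS eta p = q).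
Proof.
case: d hd => [|[|[|k]]] // _ /=; split.
  exact: Spres.
exact: surjS.
Qed.
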